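(* A uniform preorder $(A,R)$ is cartesian if and only if there exist a function $\wedge:A\times A\to A$ and an element $\top\in A$ such that the relations $$\tau=\{(a,\top)\mid a\in A\},\quad \lambda=\{(a\wedge b,a)\mid a,b\in A\},\quad \rho=\{(a\wedge b,b)\mid a,b\in A\}$$ are in $R$, and for all $r,s\in R$ the relation $\langle\!\langle r,s\rangle\!\rangle=\{(a,b\wedge c)\mid (a,b)\in r,(a,c)\in s\}$ is in $R$.
   Context: A uniform preorder is a pair $(A,R)$ with $A$ a set and $R\subseteq P(A\times A)$ such that $\mathrm{id}_A\in R$, $s\circ r\in R$ whenever $r,s\in R$, and $s\in R$ whenever $r\in R$ and $s\subseteq r$. A monotone map $f:(A,R)\to(B,S)$ is a function $f:A\to B$ with $\{(fa,fa')\mid (a,a')\in r\}\in S$ for all $r\in R$; for monotone $f,g$, $f\le g$ iff $\{(fa,ga)\mid a\in A\}\in S$. These form a locally ordered category $\mathsf{UOrd}$, in which an adjunction $f\dashv g$ ($f:X\to Y$, $g:Y\to X$) means $\mathrm{id}_X\le g\circ f$ and $f\circ g\le\mathrm{id}_Y$. $\mathsf{UOrd}$ has finite 2-products: the terminal object is a singleton set with its unique uniform preorder structure, and the product of $(A,R)$ and $(B,S)$ is $(A\times B,R\otimes S)$ where $R\otimes S$ consists of all relations contained in some $r\times s=\{((a,b),(a',b'))\mid (a,a')\in r,(b,b')\in s\}$ with $r\in R,s\in S$. A uniform preorder $(A,R)$ is cartesian if the terminal projection $(A,R)\to 1$ and the diagonal $(A,R)\to(A,R)\times(A,R)$ have right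 adjoints in $\mathsf{UOrd}$. *)

(* Defs.v *)
Definition relation (A : Type) := A -> A -> Prop.

Definition uniform_preorder (A : Type) (R : relation A -> Prop) : Prop :=
  R (fun a a' => a = a') /\
  (forall r s, R r -> R s -> R (fun a a'' => exists a', r a a' /\ s a' a'')) /\
  (forall r s, R r -> (forall a a', s a a' -> r a a') -> R s).

Definition rel_image {A B : Type} (f : A -> B) (r : relation A) : relation B :=
  fun b b' => exists a a', r a a' /\ b = f a /\ b' = f a'.

Definition monotone {A B : Type} (R : relation A -> Prop) (S : relation B -> Prop)
  (f : A -> B) : Prop :=
  forall r, R r -> S (rel_image f r).

Definition mle {A B : Type} (S : relation B -> Prop) (f g : A -> B) : Prop :=
  S (fun b b' => exists a, b = f a /\ b' = g a).

Definition has_right_adjoint {A B : Type} (R : relation A -> Prop)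
  (S : relation B -> Prop) (f : A -> B) : Prop :=
  exists g : B -> A, monotone S R g /\
    mle R (fun a => a) (fun a => g (f a)) /\
    mle S (fun b => f (g b)) (fun b => b).

(* terminal object: the singleton with its unique uniform preorder structure
   (every relation on a singleton is contained in the identity). *)
Definition terminal_rel : relation unit -> Prop := fun _ => True.

Definition prod_rel {A B : Type} (R : relation A -> Prop) (S : relation B -> Prop)
  : relation (A * B) -> Prop :=
  fun t => exists r s, R r /\ S s /\
    (forall p q, t p q -> r (fst p) (fst q) /\ s (snd p) (snd q)).

Definition cartesian (A : Type) (R : relation A -> Prop) : Prop :=
  has_right_adjoint R terminal_rel (fun _ : A => tt) /\
  has_right_adjoint R (prod_rel R R) (fun a : A => (a, a)).

(* Main.v *)
Require Import Defs.

Theorem lemma3p2 (A : Type) (R : relation A -> Prop) (HR : uniform_preorder A R) :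
  cartesian A R <->
  exists (meet : A * A -> A) (top : A),
    R (fun x y => exists a, x = a /\ y = top) /\
    R (fun x y => exists a b, x = meet (a, b) /\ y = a) /\
    R (fun x y => exists a b, x = meet (a, b) /\ y = b) /\
    (forall r s, R r -> R s ->
       R (fun x y => exists a b c, r a b /\ s a c /\ x = a /\ y = meet (b, c))).
Proof.
  destruct HR as [Hid [Hcomp Hsub]].
  split.
  - intros [[g1 [_ [Ht _]]] [g [Hmon [Heta Heps]]]].
    exists g, (g1 tt).
    destruct Heps as [r [s [Hr [Hs Hrs]]]].
    split; [|split; [|split]].
    + eapply Hsub; [exact Ht|]. intros x y [a [-> ->]]. eexists; eauto.
    + eapply Hsub; [exact Hr|]. intros x y [a [b [-> ->]]].
      exact (proj1 (Hrs (g (a,b), g (a,b)) (a,b) (ex_intro _ (a,b) (conj eq_refl eq_refl)))).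
    + eapply Hsub; [exact Hs|]. intros x y [a [b [-> ->]]].
      exact (proj2 (Hrs (g (a,b), g (a,b)) (a,b) (ex_intro _ (a,b) (conj eq_refl eq_refl)))).
    + intros r' s' Hr' Hs'.
      pose (t := fun p q : A * A => exists a b c, r' a b /\ s' a c /\ p = (a,a) /\ q = (b,c)).
      assert (Htp : prod_rel R R t).
      { exists r', s'. split; [exact Hr'|split; [exact Hs'|]].
        intros p q [a [b [c [H1 [H2 [-> ->]]]]]]. simpl. auto. }
      pose proof (Hmon t Htp) as Himg.
      eapply Hsub; [exact (Hcomp _ _ Heta Himg)|].
      intros x y [a [b [c [H1 [H2 [-> ->]]]]]].
      exists (g (a,a)). split.
      * exists a. auto.
      * exists (a,a), (b,c). split; [|auto]. exists a, b, c. auto.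
  - intros [meet [top [Ht [Hl [Hr Hp]]]]].
    split.
    + exists (fun _ => top). split; [|split].
      * intros r _. eapply Hsub; [exact Hid|].
        intros x y [a [a' [_ [-> ->]]]]. reflexivity.
      * eapply Hsub; [exact Ht|]. intros x y [a [-> ->]]. exists a; auto.
      * exact I.
    + exists meet. split; [|split].
      * intros t [r [s [Hr0 [Hs0 Hrs]]]].
        pose proof (Hp _ _ (Hcomp _ _ Hl Hr0) (Hcomp _ _ Hr Hs0)) as H.
        eapply Hsub; [exact H|].
        intros x y [p [q [Hpq [-> ->]]]].
        destruct (Hrs p q Hpq) as [H1 H2].
        destruct p as [p1 p2], q as [q1 q2]; simpl in *.
        exists (meet (p1,p2)), q1, q2. split; [|split; [|split; reflexivity]].
        -- exists p1. split; [exists p1, p2; auto|exact H1].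
        -- exists p2. split; [exists p1, p2; auto|exact H2].
      * eapply Hsub; [exact (Hp _ _ Hid Hid)|].
        intros x y [a [-> ->]]. exists a, a, a. auto.
      * exists (fun x y => exists a b, x = meet (a, b) /\ y = a),
               (fun x y => exists a b, x = meet (a, b) /\ y = b).
        split; [exact Hl|split; [exact Hr|]].
        intros p q [[b1 b2] [-> ->]]. simpl. split; exists b1, b2; auto.
Qed.
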